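(* Let $\mathbb{A}$ be a medial algebra over a field of characteristic not $2,3$ and let $\zeta\in\{-1,1\}$. Define on $\mathbb{A}\times\mathbb{A}$ the multiplication $$(x,y)\circ(z,w)=\big(xz+yw,\ \zeta(xw+yz)\big).$$ Then the resulting algebra $(\mathbb{A}\times\mathbb{A})_\zeta$ is medial, and $\mathbb{A}\times 0$ is a medial subalgebra of it isomorphic to $\mathbb{A}$.
   Context: All algebras are commutative, possibly nonassociative, finite-dimensional. Medial: $(xy)(zw)=(xz)(yw)$ identically. *)

(* Defs.v *)
(* A (commutative, possibly nonassociative, finite-dimensional)
   algebra over a field F is a finite-dimensional F-vector space V (vectType F)
   with a bilinear commutative product mul : V -> V -> V. *)
From HB Require Import structures.
From mathcomp Require Import all_boot all_order all_algebra.
Set Implicit Arguments. Unset Strict Implicit. Unset Printing Implicit Defensive.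
Import GRing.Theory.
Local Open Scope ring_scope.

Section Defs.
Variables (F : fieldType) (V : vectType F).

Definition bilinear_mul (mul : V -> V -> V) : Prop :=
  (forall (a : F) (x y z : V), mul (a *: x + y) z = a *: mul x z + mul y z) /\
  (forall (a : F) (x y z : V), mul x (a *: y + z) = a *: mul x y + mul x z).

Definition commutative_mul (mul : V -> V -> V) : Prop :=
  forall x y : V, mul x y = mul y x.

Definition is_algebra (mul : V -> V -> V) : Prop :=
  bilinear_mul mul /\ commutative_mul mul.

Definition medial (mul : V -> V -> V) : Prop :=
  forall x y z w : V, mul (mul x y) (mul z w) = mul (mul x z) (mul y w).

Definition subalgebra (mul : V -> V -> V) (S : pred V) : Prop :=
  [/\ 0 \in S,
      (forall (a : F) x y, x \in S -> y \in S -> a *: x + y \in S) &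
      (forall x y, x \in S -> y \in S -> mul x y \in S)].

Definition medial_subalgebra (mul : V -> V -> V) (S : pred V) : Prop :=
  subalgebra mul S /\
  forall x y z w, x \in S -> y \in S -> z \in S -> w \in S ->
    mul (mul x y) (mul z w) = mul (mul x z) (mul y w).
End Defs.

Definition double_mul (F : fieldType) (V : vectType F) (zeta : F)
  (mul : V -> V -> V) (p q : (V * V)%type) : (V * V)%type :=
  (mul p.1 q.1 + mul p.2 q.2, zeta *: (mul p.1 q.2 + mul p.2 q.1)).

Definition alg_iso_to_sub (F : fieldType) (V W : vectType F)
  (mul : V -> V -> V) (mulW : W -> W -> W) (S : pred W) : Prop :=
  exists f : V -> W,
    [/\ linear f, injective f,
        (forall u, u \in S <-> exists x, f x = u) &
        (forall x y, f (mul x y) = mulW (f x) (f y))].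

Definition first_factor (F : fieldType) (V : vectType F) : pred (V * V)%type :=
  fun p => p.2 == 0.

(* Main.v *)
Require Import Defs.
From mathcomp Require Import all_boot all_order all_algebra.
Import GRing.Theory.
Local Open Scope ring_scope.
Section S.
Variables (F : fieldType) (V : vectType F) (mul : V -> V -> V) (zeta:F).
Hypothesis (Hb : bilinear_mul mul) (Hm : medial mul) (Hz : zeta * zeta = 1).
Lemma mulDl x y z : mul (x + y) z = mul x z + mul y z.
Proof. by have := Hb.1 1 x y z; rewrite !scale1r. Qed.
Lemma mulDr x y z : mul z (x + y) = mul z x + mul z y.
Proof. by have := Hb.2 1 z x y; rewrite !scale1r. Qed.
Lemma mul0l z : mul 0 z = 0.
Proof. by apply: (addrI (mul 0 z)); rewrite -mulDl !addr0. Qed.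
Lemma mul0r z : mul z 0 = 0.
Proof. by apply: (addrI (mul z 0)); rewrite -mulDr !addr0. Qed.
Lemma mulZl a x z : mul (a *: x) z = a *: mul x z.
Proof. by have := Hb.1 a x 0 z; rewrite !addr0 mul0l addr0. Qed.
Lemma mulZr a x z : mul z (a *: x) = a *: mul z x.
Proof. by have := Hb.2 a z x 0; rewrite !addr0 mul0r addr0. Qed.
Lemma med2 : medial (double_mul zeta mul).
Proof.
move=> [x1 y1] [x2 y2] [x3 y3] [x4 y4]; rewrite /double_mul /=.
rewrite !(mulDl, mulDr, mulZl, mulZr, scalerA, Hz, scale1r, scalerDr).
congr (_ , _);
rewrite [in RHS](Hm x1 x3 x2) [in RHS](Hm x1 x3 y2) [in RHS](Hm y1 y3 x2) [in RHS](Hm y1 y3 y2)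
  [in RHS](Hm x1 y3 x2) [in RHS](Hm x1 y3 y2) [in RHS](Hm y1 x3 x2) [in RHS](Hm y1 x3 y2);
by rewrite [LHS](AC ((2*2)*(2*2)) (((1*5)*(8*4))*((2*6)*(7*3)))).
Qed.
Lemma pZ1 a (p : (V*V)%type) : (a *: p).1 = a *: p.1. Proof. by []. Qed.
Lemma pZ2 a (p : (V*V)%type) : (a *: p).2 = a *: p.2. Proof. by []. Qed.
Lemma pD1 (p q : (V*V)%type) : (p + q).1 = p.1 + q.1. Proof. by []. Qed.
Lemma pD2 (p q : (V*V)%type) : (p + q).2 = p.2 + q.2. Proof. by []. Qed.
Lemma alg2 (Hc : commutative_mul mul) : is_algebra (double_mul zeta mul).
Proof.
split; [split|].
- move=> a [x1 y1] [x2 y2] [x3 y3]; rewrite /double_mul /=.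
  rewrite !(mulDl, mulDr, mulZl, mulZr, scalerDr, scalerA).
  congr (_, _); rewrite ?(pZ1, pZ2, pD1, pD2) /= ?(scalerDr, scalerA) //; first by rewrite (AC (2*2) ((1*3)*(2*4))).
  by rewrite mulrC (AC (2*2) ((1*3)*(2*4))).
- move=> a [x1 y1] [x2 y2] [x3 y3]; rewrite /double_mul /=.
  rewrite !(mulDl, mulDr, mulZl, mulZr, scalerDr, scalerA).
  congr (_, _); rewrite ?(pZ1, pZ2, pD1, pD2) /= ?(scalerDr, scalerA) //; first by rewrite (AC (2*2) ((1*3)*(2*4))).
  by rewrite mulrC (AC (2*2) ((1*3)*(2*4))).
- move=> [x1 y1] [x2 y2]; rewrite /double_mul /=.
  by rewrite (Hc x1) (Hc y1) (Hc x1 y2) (Hc y1 x2) (addrC (mul y2 x1)).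
Qed.
End S.
Theorem proposition3p13 (F : fieldType) (V : vectType F) (mul : V -> V -> V)
  (zeta : F) :
  (2%:R : F) != 0 -> (3%:R : F) != 0 ->
  is_algebra mul -> medial mul ->
  (zeta = 1 \/ zeta = -1) ->
  [/\ is_algebra (double_mul zeta mul),
      medial (double_mul zeta mul),
      medial_subalgebra (double_mul zeta mul) (@first_factor F V)
    & alg_iso_to_sub mul (double_mul zeta mul)
        (@first_factor F V)].
Proof.
move=> _ _ [Hb Hc] Hm Hzeta.
have Hz : zeta * zeta = 1 by case: Hzeta => ->; rewrite ?mulrNN mulr1.
have Hmed := @med2 F V mul zeta Hb Hm Hz.
split.
- exact: (@alg2 F V mul zeta Hb Hc).
- exact: Hmed.
- split; last by move=> *; apply: Hmed.
  split.
  + by rewrite /first_factor unfold_in /=.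
  + move=> a [x1 y1] [x2 y2]; rewrite /first_factor !unfold_in /= => /eqP -> /eqP ->.
    by rewrite scaler0 addr0.
  + move=> [x1 y1] [x2 y2]; rewrite /first_factor !unfold_in /= => /eqP -> /eqP ->.
    by rewrite /double_mul /= (@mul0l F V mul Hb) (@mul0r F V mul Hb) addr0 scaler0.
- exists (fun x => (x, 0)); split.
  + by move=> a x y /=; rewrite -[RHS]/(a *: x + y, a *: 0 + 0) scaler0 addr0.
  + by move=> x y [].
  + move=> [u1 u2]; rewrite /first_factor unfold_in /=; split.
    * by move/eqP ->; exists u1.
    * by case=> x [_ <-].
  + by move=> x y; rewrite /double_mul /= !(@mul0l F V mul Hb) !(@mul0r F V mul Hb) !addr0 scaler0.
Qed.
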